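(* Let $m,d_o,N_D\ge1$ be integers, $d=md_o$, and let $(x^j,y^j)_{j=1}^{N_D}$ be data with $x^j\in\mathbb R^{d_o}$ and $y^j\in\{1,\dots,m\}$. For $q=(q^1,\dots,q^m)\in\mathbb R^d$ with $q^i\in\mathbb R^{d_o}$ let \[p(y^j\mid q)=\frac{\exp(\langle x^j,q^{y^j}\rangle)}{\sum_{k=1}^m\exp(\langle x^j,q^k\rangle)},\qquad U(q)=\frac{\|q\|^2}{2\sigma_0^2}+\mathrm{const}-\sum_{j=1}^{N_D}\log p(y^j\mid q),\] with $\sigma_0>0$. Then \[\sup_{q\in\mathbb R^d}\|\nabla^2U(q)\|\le\sigma_0^{-2}+\Big\|\sum_{l=1}^{N_D}x^l(x^l)^T\Big\|,\qquad \sup_{q\in\mathbb R^d}\|\nabla^3U(q)\|_{\{1,2\}\{3\}}\le6\,\Big\|\sum_{l=1}^{N_D}x^l(x^l)^T\Big(\sum_{k=1}^{N_D}\langle x^l,x^k\rangle^2\Big)\Big\|^{1/2}.\]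
   Context: $\|\cdot\|$ of a matrix is the spectral (operator) norm. For $A\in\mathbb R^{d\times d\times d}$, $\|A\|_{\{1,2\}\{3\}}=\sup\{\sum_{i,j,k}A_{ijk}x_{ij}y_k:\sum_{i,j}x_{ij}^2\le1,\sum_ky_k^2\le1\}$, and $(\nabla^3U)_{ijk}=\partial_i\partial_j\partial_kU$. The constant in $U$ (the log-normalization of the Gaussian prior) does not depend on $q$. *)

(* Defs.v *)
From HB Require Import structures.
From mathcomp Require Import all_boot all_order all_algebra.
From mathcomp Require Import all_classical all_reals all_analysis.
Set Implicit Arguments. Unset Strict Implicit. Unset Printing Implicit Defensive.
Import Order.TTheory GRing.Theory Num.Theory.
Import numFieldNormedType.Exports.
Local Open Scope classical_set_scope.
Local Open Scope ring_scope.

(* Parameter vectors q in R^d, d = m * d_o, are represented as m x d_o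
   matrices: row i of q is the block q^i in R^{d_o}.  Coordinates of R^d are
   indexed by pairs (i, a) : 'I_m * 'I_d_o. *)

Definition sqnorm (R : realType) (I : finType) (v : I -> R) : R :=
  \sum_(i : I) v i ^+ 2.

Definition opnorm (R : realType) (I : finType) (A : I -> I -> R) : R :=
  sup [set Num.sqrt (sqnorm (fun i => \sum_(j : I) A i j * v j))
       | v in [set v : I -> R | sqnorm v <= 1]].

Definition tnorm123 (R : realType) (I : finType) (A : I -> I -> I -> R) : R :=
  sup [set \sum_(i : I) \sum_(j : I) \sum_(k : I) A i j k * xy.1 (i, j) * xy.2 k
       | xy in [set xy : ((I * I)%type -> R) * (I -> R) |
                 sqnorm xy.1 <= 1 /\ sqnorm xy.2 <= 1]].

Definition ip (R : realType) (m d0 : nat) (xj : 'I_d0 -> R) (q : 'M[R]_(m, d0))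
  (k : 'I_m) : R := \sum_(a < d0) xj a * q k a.

Definition lik (R : realType) (m d0 : nat) (xj : 'I_d0 -> R) (yj : 'I_m)
  (q : 'M[R]_(m, d0)) : R :=
  expR (ip xj q yj) / \sum_(k < m) expR (ip xj q k).

Definition Upot (R : realType) (m d0 ND : nat) (x : 'I_ND -> 'I_d0 -> R)
  (y : 'I_ND -> 'I_m) (sigma0 c : R) (q : 'M[R]_(m, d0)) : R :=
  (\sum_(i < m) \sum_(a < d0) q i a ^+ 2) / (2 * sigma0 ^+ 2) + c
  - \sum_(j < ND) ln (lik (x j) (y j) q).

Definition ebasis (R : realType) (m d0 : nat) (ia : ('I_m * 'I_d0)%type)
  : 'M[R]_(m, d0) := delta_mx ia.1 ia.2.

Definition hess (R : realType) (m d0 : nat) (f : 'M[R]_(m, d0) -> R)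
  (q : 'M[R]_(m, d0)) (ia jb : ('I_m * 'I_d0)%type) : R :=
  derive (fun p => derive f p (ebasis R jb)) q (ebasis R ia).

Definition third (R : realType) (m d0 : nat) (f : 'M[R]_(m, d0) -> R)
  (q : 'M[R]_(m, d0)) (ia jb kc : ('I_m * 'I_d0)%type) : R :=
  derive (fun p => derive (fun r => derive f r (ebasis R kc)) p (ebasis R jb))
    q (ebasis R ia).

(* Main.v *)
Require Import Defs.
From HB Require Import structures.
From mathcomp Require Import all_boot all_order all_algebra.
From mathcomp Require Import all_classical all_reals all_analysis.
Import Order.TTheory GRing.Theory Num.Theory.
Import numFieldNormedType.Exports.
Local Open Scope ring_scope.
From mathcomp Require Import ring lra.

Module Lemma15Helpers.
Local Open Scope classical_set_scope.
Section Der.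
Variable R : realType.

Lemma deriveLine (V W : normedModType R) (F : V -> W) a v :
  'D_v F a = 'D_1 (fun h : R => F (h *: v + a)) 0.
Proof.
rewrite /derive.
set g2 := (fun h : R => h^-1 *: ((F \o shift a) (h *: v) - F a)).
set g3 := (fun h : R => h^-1 *: (((fun h : R => F (h *: v + a)) \o shift 0) h%:A - F (0 *: v + a))).
suff -> : g2 = g3 by [].
apply: funext => h; rewrite /g3 /g2 /=.
by rewrite scale0r add0r [_%:A]mulr1 addr0.
Qed.

Lemma is_derive_compR (V : normedModType R) (f : V -> R) (g : R -> R) a v df dg :
  is_derive a v f df -> is_derive (f a) 1 g dg -> is_derive a v (g \o f) (dg * df).
Proof.
move=> [fd fv] [gd gv].
set phi := fun h : R => f (h *: v + a).
have phid : derivable phi 0 1 by exact: ((derivable1P f a v).1 fd).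
have phi0 : phi 0 = f a by rewrite /phi scale0r add0r.
have gd' : derivable g (phi 0) 1 by rewrite phi0.
have dc : derivable (g \o phi) 0 1.
  apply/derivable1_diffP.
  have h1 : differentiable phi 0 by apply/derivable1_diffP.
  have h2 : differentiable g (phi 0) by apply/derivable1_diffP.
  exact: differentiable_comp h1 h2.
split.
  by apply/(derivable1P (g \o f) a v).
rewrite deriveLine.
have -> : (fun h : R => (g \o f) (h *: v + a)) = g \o phi by [].
rewrite -derive1E derive1_comp // !derive1E phi0 gv -fv deriveLine //.
Qed.

Lemma is_derive_quad (V : normedModType R) (f : V -> R) a v c d :
  (forall h : R, f (h *: v + a) = f a + h * c + h^+2 * d) -> is_derive a v f c.
Proof.
move=> hf.
have L : (fun h : R => h^-1 *: ((f \o shift a) (h *: v) - f a)) @ 0^' --> c.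
  apply: (@cvg_trans _ ((fun h : R => c + h * d) @ 0^')).
    apply: near_eq_cvg; near=> h.
    have hn0 : h != 0 by near: h; exact: nbhs_dnbhs_neq.
    rewrite /= hf.
    rewrite -[_ *: _]/(h^-1 * _); field; exact: hn0.
  have H0 : (fun h : R => c + h * d) @ (nbhs (0:R)) --> c + 0 * d.
    apply: cvgD; first exact: cvg_cst.
    apply: cvgMl. exact: cvg_id.
  rewrite mul0r addr0 in H0.
  exact: cvg_within_filter H0.
by split; [apply: cvgP L | apply: cvg_lim L].
Unshelve. all: by end_near.
Qed.

End Der.
Arguments is_derive_compR {R V f g a v df dg}.
Arguments is_derive_quad {R V f a v} c d.

Section Helpers.
Variable R : realType.
Variable V : normedModType R.
Implicit Types (f g : V -> R) (q v : V).

Lemma idD f g q v df dg : is_derive q v f df -> is_derive q v g dg ->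
  is_derive q v (fun p => f p + g p) (df + dg).
Proof. move=> hf hg; exact: (is_deriveD hf hg). Qed.

Lemma idB f g q v df dg : is_derive q v f df -> is_derive q v g dg ->
  is_derive q v (fun p => f p - g p) (df - dg).
Proof. move=> hf hg; exact: (is_deriveB hf hg). Qed.

Lemma idM f g q v df dg : is_derive q v f df -> is_derive q v g dg ->
  is_derive q v (fun p => f p * g p) (df * g q + f q * dg).
Proof.
move=> hf hg; have H := is_deriveM hf hg.
have -> : df * g q + f q * dg = f q *: dg + g q *: df.
  by rewrite /GRing.scale /= addrC mulrC [g q * _]mulrC.
exact: H.
Qed.

Lemma idcst q v (k : R) : is_derive q v (fun _ : V => k) 0.
Proof. exact: is_derive_cst. Qed.

Lemma idMc f q v df (k : R) : is_derive q v f df ->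
  is_derive q v (fun p => f p * k) (df * k).
Proof.
move=> hf; have H := @idM f (fun _ => k) q v df 0 hf (idcst q v k).
by rewrite mulr0 addr0 in H.
Qed.


Lemma idS n (h : 'I_n -> V -> R) q v dh : (forall i, is_derive q v (h i) (dh i)) ->
  is_derive q v (fun p => \sum_(i < n) h i p) (\sum_(i < n) dh i).
Proof.
move=> hh; have := is_derive_sum hh; by rewrite fct_sumE.
Qed.

Lemma idExp f q v df : is_derive q v f df ->
  is_derive q v (fun p => expR (f p)) (expR (f q) * df).
Proof. move=> hf; have H := is_derive_compR hf (is_derive_expR (f q)). exact: H. Qed.

Lemma idLn f q v df : is_derive q v f df -> 0 < f q ->
  is_derive q v (fun p => ln (f p)) ((f q)^-1 * df).
Proof. move=> hf h0; exact: (is_derive_compR hf (is_derive1_ln h0)). Qed.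

Lemma idInv f q v df : is_derive q v f df -> f q != 0 ->
  is_derive q v (fun p => (f p)^-1) (- (f q ^+ 2)^-1 * df).
Proof.
move=> hf h0.
have hi := @is_deriveV R (fun y => y) (f q) 1 1 h0 (is_derive_id (f q) 1).
have H := is_derive_compR hf hi.
by rewrite /GRing.scale /= mulr1 in H.
Qed.

End Helpers.
Arguments idM {R V f g q v df dg}.
Arguments idcst {R V} q v k.
Arguments idD {R V f g q v df dg}.
Arguments idB {R V f g q v df dg}.
Arguments idMc {R V f q v df} k.
Arguments idS {R V n h q v dh}.
Arguments idExp {R V f q v df}.
Arguments idLn {R V f q v df}.
Arguments idInv {R V f q v df}.

Section Model.
Variable R : realType.
Variables (m d0 ND : nat) (x : 'I_ND -> 'I_d0 -> R).
Local Notation V := 'M[R]_(m, d0).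

Definition sf l k (q : V) := \sum_(a < d0) x l a * q k a.
Definition Zf l (q : V) := \sum_(k < m) expR (sf l k q).
Definition Pf l k (q : V) := expR (sf l k q) / Zf l q.
Definition mf l (q v : V) := \sum_(i < m) Pf l i q * sf l i v.
Definition dPf l k (q u : V) := Pf l k q * (sf l k u - mf l q u).

Lemma id_eq (f : V -> R) q v (df df' : R) : is_derive q v f df -> df = df' -> is_derive q v f df'.
Proof. by move=> H <-. Qed.
Arguments id_eq {f q v df df'}.

Lemma sf_line l k q v h : sf l k (h *: v + q) = sf l k q + h * sf l k v.
Proof.
rewrite /sf mulr_sumr -big_split; apply: eq_bigr => a _; rewrite !mxE /=; ring.
Qed.

Lemma id_sf l k q v : is_derive q v (sf l k) (sf l k v).
Proof. apply: (is_derive_quad _ 0) => h; rewrite sf_line; ring. Qed.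

Hypothesis hm : (0 < m)%N.

Lemma Zf_gt0 l q : 0 < Zf l q.
Proof.
rewrite /Zf (bigD1 (Ordinal hm)) //=.
have h1 := expR_gt0 (sf l (Ordinal hm) q).
have h2 : 0 <= \sum_(i < m | i != Ordinal hm) expR (sf l i q).
  by apply: sumr_ge0 => i _; apply/ltW/expR_gt0.
lra.
Qed.

Lemma id_Zf l q v : is_derive q v (Zf l) (\sum_(k < m) expR (sf l k q) * sf l k v).
Proof. have H := (idS (fun k => idExp (id_sf l k q v))). rewrite /Zf. exact: H. Qed.

Lemma id_Pf l k q v : is_derive q v (Pf l k) (dPf l k q v).
Proof.
have hZ : Zf l q != 0 by apply/lt0r_neq0/Zf_gt0.
have H := idM (idExp (id_sf l k q v)) (idInv (id_Zf l q v) hZ).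
apply: (id_eq H).
rewrite /dPf /mf /Pf.
have -> : \sum_(i < m) expR (sf l i q) / Zf l q * sf l i v
   = (\sum_(i < m) expR (sf l i q) * sf l i v) / Zf l q.
  by rewrite mulr_suml; apply: eq_bigr => i _; rewrite mulrAC.
field; exact: hZ.
Qed.


Variables (y : 'I_ND -> 'I_m) (sigma0 c : R).
Hypothesis hs : sigma0 != 0.

Definition Qf (q : V) := (\sum_(i < m) \sum_(a < d0) q i a ^+ 2) / (2 * sigma0 ^+ 2).
Definition Uq (q : V) := Qf q + c - \sum_(l < ND) (sf l (y l) q - ln (Zf l q)).
Definition ipm (v w : V) := \sum_(i < m) \sum_(a < d0) v i a * w i a.
Definition Gf (q w : V) := ipm q w / sigma0 ^+ 2 - \sum_(l < ND) (sf l (y l) w - mf l q w).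
Definition Hf (q v w : V) := ipm v w / sigma0 ^+ 2 + \sum_(l < ND) \sum_(k < m) dPf l k q v * sf l k w.
Definition Tf (q u v w : V) := \sum_(l < ND) \sum_(k < m)
  (dPf l k q u * (sf l k v - mf l q v) - Pf l k q * (\sum_(i < m) dPf l i q u * sf l i v)) * sf l k w.

Lemma Upot_eq : Upot x y sigma0 c = Uq.
Proof.
apply: funext => q; rewrite /Upot /Uq /Qf; congr (_ - _).
apply: eq_bigr => l _; rewrite /lik.
rewrite lnM ?posrE ?expR_gt0 ?invr_gt0 ?Zf_gt0 // lnV ?posrE ?Zf_gt0 // expRK.
by [].
Qed.

Lemma ipm_line q v w h : ipm (h *: v + q) w = ipm q w + h * ipm v w.
Proof.
rewrite /ipm mulr_sumr -big_split; apply: eq_bigr => i _.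
rewrite mulr_sumr -big_split; apply: eq_bigr => a _; rewrite !mxE /=; ring.
Qed.

Lemma Qf_line q v h : Qf (h *: v + q) = Qf q + h * (ipm q v / sigma0 ^+ 2) + h ^+ 2 * (Qf v).
Proof.
rewrite /Qf /ipm.
have E : forall i, \sum_(a < d0) (h *: v + q) i a ^+ 2 =
   \sum_(a < d0) q i a ^+ 2 + (2 * h) * \sum_(a < d0) q i a * v i a + h ^+ 2 * \sum_(a < d0) v i a ^+ 2.
  move=> i; rewrite !mulr_sumr -!big_split; apply: eq_bigr => a _; rewrite !mxE /=; ring.
rewrite (eq_bigr _ (fun i _ => E i)) !big_split -!mulr_sumr /=.
field; exact: hs.
Qed.

Lemma id_Qf q v : is_derive q v Qf (ipm q v / sigma0 ^+ 2).
Proof. exact: (is_derive_quad _ (Qf v) (Qf_line q v)). Qed.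

Lemma id_Uq q w : is_derive q w Uq (Gf q w).
Proof.
have H1 := idD (id_Qf q w) (idcst q w c).
have H2 : forall l, is_derive q w (fun p => sf l (y l) p - ln (Zf l p))
     (sf l (y l) w - mf l q w).
  move=> l; have H := idB (id_sf l (y l) q w) (idLn (id_Zf l q w) (Zf_gt0 l q)).
  apply: (id_eq H).
  suff -> : (Zf l q)^-1 * \sum_(k < m) expR (sf l k q) * sf l k w = mf l q w by [].
  rewrite /mf /Pf mulr_sumr.
  by apply: eq_bigr => i _; ring.
have H := idB H1 (idS H2).
apply: (id_eq H); rewrite /Gf addr0; by [].
Qed.

Lemma derive_Uq w : (fun p => 'D_w Uq p) = (fun p => Gf p w).
Proof. apply: funext => p; exact: (@derive_val _ _ _ _ _ _ _ (id_Uq p w)). Qed.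


Lemma id_mf l q u v : is_derive q u (fun p => mf l p v) (\sum_(i < m) dPf l i q u * sf l i v).
Proof. exact: (idS (fun i => idMc (sf l i v) (id_Pf l i q u))). Qed.

Lemma id_G q v w : is_derive q v (fun p => Gf p w) (Hf q v w).
Proof.
have H1 : is_derive q v (fun p => ipm p w / sigma0 ^+ 2) (ipm v w / sigma0 ^+ 2).
  apply: (is_derive_quad _ 0) => h; rewrite ipm_line; ring.
have H2 : forall l, is_derive q v (fun p => sf l (y l) w - mf l p w)
     (0 - \sum_(i < m) dPf l i q v * sf l i w).
  by move=> l; exact: (idB (idcst q v (sf l (y l) w)) (id_mf l q v w)).
have H := idB H1 (idS H2).
apply: (id_eq H); rewrite /Hf.
have -> : \sum_(l < ND) (0 - \sum_(i < m) dPf l i q v * sf l i w)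
    = - \sum_(l < ND) \sum_(i < m) dPf l i q v * sf l i w.
  by rewrite -sumrN; apply: eq_bigr => l _; rewrite sub0r.
by rewrite opprK.
Qed.

Lemma derive_G w v : (fun p => 'D_v (fun r => Gf r w) p) = (fun p => Hf p v w).
Proof. apply: funext => p; exact: (@derive_val _ _ _ _ _ _ _ (id_G p v w)). Qed.

Lemma id_H q u v w : is_derive q u (fun p => Hf p v w) (Tf q u v w).
Proof.
have H2 : forall l k, is_derive q u (fun p => dPf l k p v * sf l k w)
   ((dPf l k q u * (sf l k v - mf l q v) + Pf l k q * (0 - \sum_(i < m) dPf l i q u * sf l i v)) * sf l k w).
  move=> l k; apply: idMc.
  exact: (idM (id_Pf l k q u) (idB (idcst q u (sf l k v)) (id_mf l q u v))).
have H := idD (idcst q u (ipm v w / sigma0 ^+ 2)) (idS (fun l => idS (H2 l))).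
apply: (id_eq H); rewrite /Tf add0r.
apply: eq_bigr => l _; apply: eq_bigr => k _; ring.
Qed.

Lemma derive_H w v u : (fun p => 'D_u (fun r => Hf r v w) p) = (fun p => Tf p u v w).
Proof. apply: funext => p; exact: (@derive_val _ _ _ _ _ _ _ (id_H p u v w)). Qed.

Lemma hess_eq q ia jb : hess (Upot x y sigma0 c) q ia jb = Hf q (ebasis R ia) (ebasis R jb).
Proof.
rewrite /hess Upot_eq derive_Uq.
exact: (@derive_val _ _ _ _ _ _ _ (id_G q (ebasis R ia) (ebasis R jb))).
Qed.

Lemma third_eq q ia jb kc : third (Upot x y sigma0 c) q ia jb kc
   = Tf q (ebasis R ia) (ebasis R jb) (ebasis R kc).
Proof.
rewrite /third Upot_eq derive_Uq derive_G.
exact: (@derive_val _ _ _ _ _ _ _ (id_H q (ebasis R ia) (ebasis R jb) (ebasis R kc))).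
Qed.

End Model.
Arguments sf {R m d0 ND}.
Arguments Zf {R m d0 ND}.
Arguments Pf {R m d0 ND}.
Arguments mf {R m d0 ND}.
Arguments dPf {R m d0 ND}.
Arguments ipm {R m d0}.
Arguments Hf {R m d0 ND} x sigma0.
Arguments Tf {R m d0 ND}.

Section Gen.
Variable R : realType.

Lemma sum_pair (I J : finType) (F : (I * J)%type -> R) :
  \sum_(p : I * J) F p = \sum_(i : I) \sum_(j : J) F (i, j).
Proof.
rewrite (pair_big xpredT xpredT (fun i j => F (i, j))) /=.
by apply: eq_bigr => -[i j].
Qed.
Arguments sum_pair {I J}.

Lemma sqnorm_ge0 (I : finType) (v : I -> R) : 0 <= sqnorm v.
Proof. by apply: sumr_ge0 => i _; apply: sqr_ge0. Qed.
Arguments sqnorm_ge0 {I}.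

Lemma sqnorm0 (I : finType) (v : I -> R) : sqnorm v = 0 -> forall i, v i = 0.
Proof.
move=> h i; have := psumr_eq0P (fun i _ => sqr_ge0 (v i)) h (isT : xpredT i).
by move/eqP; rewrite sqrf_eq0 => /eqP.
Qed.
Arguments sqnorm0 {I v}.

Lemma CS (I : finType) (a b : I -> R) :
  (\sum_i a i * b i) ^+ 2 <= (\sum_i a i ^+ 2) * (\sum_i b i ^+ 2).
Proof.
set A := \sum_i a i ^+ 2; set B := \sum_i b i ^+ 2; set C := \sum_i a i * b i.
have hB : 0 <= B by apply: sqnorm_ge0.
have hA : 0 <= A by apply: sqnorm_ge0.
have [B0|Bpos] := eqVneq B 0.
  have bz := sqnorm0 B0.
  have -> : C = 0 by rewrite /C big1 // => i _; rewrite bz mulr0.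
  by rewrite B0 expr0n /= mulr0.
have E : \sum_i (a i * B - b i * C) ^+ 2 = B * (A * B - C ^+ 2).
  transitivity (\sum_i (B ^+ 2 * a i ^+ 2 - (2 * B * C) * (a i * b i) + C ^+ 2 * b i ^+ 2)).
    by apply: eq_bigr => i _; ring.
  rewrite big_split /= sumrB -!mulr_sumr -/A -/B -/C; ring.
have h0 : 0 <= B * (A * B - C ^+ 2).
  by rewrite -E; apply: sumr_ge0 => i _; apply: sqr_ge0.
have Bp : 0 < B by rewrite lt0r Bpos.
rewrite pmulr_rge0 // subr_ge0 in h0.
exact: h0.
Qed.
Arguments CS {I}.

Lemma CSabs (I : finType) (a b : I -> R) :
  `|\sum_i a i * b i| <= Num.sqrt (\sum_i a i ^+ 2) * Num.sqrt (\sum_i b i ^+ 2).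
Proof.
rewrite -sqrtrM; last by apply: sqnorm_ge0.
rewrite -sqrtr_sqr ler_sqrt; first exact: CS.
by apply: mulr_ge0; apply: sqnorm_ge0.
Qed.
Arguments CSabs {I}.

Lemma CS1 (I : finType) (a b : I -> R) :
  \sum_i a i * b i <= Num.sqrt (\sum_i a i ^+ 2) * Num.sqrt (\sum_i b i ^+ 2).
Proof. exact: le_trans (ler_norm _) (CSabs a b). Qed.
Arguments CS1 {I}.

Lemma sqrt_le_sq (a b : R) : 0 <= b -> a <= b ^+ 2 -> Num.sqrt a <= b.
Proof.
move=> hb hab.
have -> : b = Num.sqrt (b ^+ 2) by rewrite sqrtr_sqr ger0_norm.
by rewrite ler_sqrt // sqr_ge0.
Qed.

Lemma Minkowski (I : finType) (a b : I -> R) :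
  Num.sqrt (\sum_i (a i + b i) ^+ 2) <= Num.sqrt (\sum_i a i ^+ 2) + Num.sqrt (\sum_i b i ^+ 2).
Proof.
apply: sqrt_le_sq; first by apply: addr_ge0; apply: sqrtr_ge0.
have hA := sqnorm_ge0 a; have hB := sqnorm_ge0 b.
rewrite /sqnorm in hA hB.
have E : \sum_i (a i + b i) ^+ 2 = \sum_i a i ^+ 2 + 2 * \sum_i a i * b i + \sum_i b i ^+ 2.
  rewrite mulr_sumr -!big_split; apply: eq_bigr => i _ /=; ring.
rewrite E sqrrD !sqr_sqrtr //.
have := CS1 a b; lra.
Qed.
Arguments Minkowski {I}.

Definition mv (I : finType) (A : I -> I -> R) (w : I -> R) := fun i => \sum_j A i j * w j.
Arguments mv {I}.

Lemma opnorm_has_sup (I : finType) (A : I -> I -> R) :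
  has_sup [set Num.sqrt (sqnorm (fun i => \sum_(j : I) A i j * v j))
       | v in [set v : I -> R | sqnorm v <= 1]].
Proof.
split.
  exists (Num.sqrt (sqnorm (fun i => \sum_(j : I) A i j * (0 : I -> R) j))).
  exists 0 => //=; rewrite /sqnorm big1 // => i _; rewrite expr0n.
  by [].
exists (Num.sqrt (\sum_i \sum_j A i j ^+ 2)) => r [v /= hv <-].
rewrite ler_sqrt; last by apply: sumr_ge0 => i _; apply: sqnorm_ge0.
apply: ler_sum => i _.
apply: le_trans (CS _ _) _.
rewrite -[X in _ <= X]mulr1; apply: ler_wpM2l => //; apply: sqnorm_ge0.
Qed.
Arguments opnorm_has_sup {I}.

Lemma opnorm_ub (I : finType) (A : I -> I -> R) (w : I -> R) :
  sqnorm w <= 1 -> Num.sqrt (sqnorm (mv A w)) <= opnorm A.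
Proof.
move=> hw; apply: sup_upper_bound; first exact: opnorm_has_sup.
by exists w.
Qed.
Arguments opnorm_ub {I} A {w}.

Lemma opnorm_ge0 (I : finType) (A : I -> I -> R) : 0 <= opnorm A.
Proof.
have h : sqnorm (fun _ : I => 0 : R) <= 1.
  by rewrite /sqnorm big1 // => i _; rewrite expr0n.
apply: le_trans (opnorm_ub A h); exact: sqrtr_ge0.
Qed.
Arguments opnorm_ge0 {I}.

Lemma opnorm_scale (I : finType) (A : I -> I -> R) (w : I -> R) :
  sqnorm (mv A w) <= opnorm A ^+ 2 * sqnorm w.
Proof.
have [w0|wn0] := eqVneq (sqnorm w) 0.
  have wz := sqnorm0 w0.
  rewrite w0 mulr0 /sqnorm /mv big1 // => i _.
  by rewrite big1 ?expr0n // => j _; rewrite wz mulr0.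
have wp : 0 < sqnorm w by rewrite lt0r wn0 sqnorm_ge0.
set n := Num.sqrt (sqnorm w).
have np : 0 < n by rewrite sqrtr_gt0.
have hw' : sqnorm (fun j => w j / n) <= 1.
  rewrite /sqnorm.
  have -> : \sum_i (w i / n) ^+ 2 = (\sum_i w i ^+ 2) / n ^+ 2.
    by rewrite mulr_suml; apply: eq_bigr => i _; rewrite expr_div_n.
  rewrite /n sqr_sqrtr ?sqnorm_ge0 // divff //.
have := opnorm_ub A hw'.
have -> : sqnorm (mv A (fun j => w j / n)) = sqnorm (mv A w) / n ^+ 2.
  rewrite /sqnorm /mv mulr_suml; apply: eq_bigr => i _.
  rewrite -expr_div_n; congr (_ ^+ 2).
  by rewrite mulr_suml; apply: eq_bigr => j _; rewrite mulrA.
move=> h.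
have h2 : sqnorm (mv A w) / n ^+ 2 <= opnorm A ^+ 2.
  rewrite -[X in X <= _]sqr_sqrtr; last first.
    by apply: divr_ge0; [apply: sqnorm_ge0 | apply: sqr_ge0].
  by rewrite ler_pXn2r // ?nnegrE ?sqrtr_ge0 ?opnorm_ge0.
have n2 : n ^+ 2 = sqnorm w by rewrite /n sqr_sqrtr // sqnorm_ge0.
rewrite -n2; rewrite ler_pdivrMr ?exprn_gt0 // in h2.
Qed.
Arguments opnorm_scale {I}.

Lemma opnorm_scale_sqrt (I : finType) (A : I -> I -> R) (w : I -> R) :
  Num.sqrt (sqnorm (mv A w)) <= opnorm A * Num.sqrt (sqnorm w).
Proof.
apply: sqrt_le_sq; first by apply: mulr_ge0; [apply: opnorm_ge0 | apply: sqrtr_ge0].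
by rewrite exprMn sqr_sqrtr ?sqnorm_ge0 //; apply: opnorm_scale.
Qed.
Arguments opnorm_scale_sqrt {I}.

Lemma qf_opnorm (I : finType) (A : I -> I -> R) (u : I -> R) :
  \sum_i u i * mv A u i <= opnorm A * sqnorm u.
Proof.
apply: le_trans (CS1 _ _) _.
apply: le_trans.
  apply: ler_wpM2l; first exact: sqrtr_ge0.
  exact: opnorm_scale_sqrt.
rewrite mulrCA -expr2 sqr_sqrtr //; exact: sqnorm_ge0.
Qed.
Arguments qf_opnorm {I}.

End Gen.
Arguments sum_pair {R I J}.
Arguments sqnorm_ge0 {R I}.
Arguments sqnorm0 {R I v}.
Arguments CS {R I}.
Arguments CSabs {R I}.
Arguments CS1 {R I}.
Arguments Minkowski {R I}.
Arguments opnorm_has_sup {R I}.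
Arguments opnorm_ub {R I} A {w}.
Arguments opnorm_ge0 {R I}.
Arguments opnorm_scale {R I}.
Arguments opnorm_scale_sqrt {R I}.
Arguments qf_opnorm {R I}.
Arguments mv {R I}.
Arguments sqrt_le_sq {R}.

Section HessB.
Variable R : realType.
Variables (m d0 ND : nat) (x : 'I_ND -> 'I_d0 -> R).

Definition Smat (w : 'I_ND -> R) := fun a b : 'I_d0 => \sum_(l < ND) x l a * x l b * w l.

Lemma qfx (w : 'I_ND -> R) (u : 'I_d0 -> R) :
  \sum_(l < ND) w l * (\sum_(a < d0) x l a * u a) ^+ 2 = \sum_(a < d0) u a * mv (Smat w) u a.
Proof.
transitivity (\sum_(l < ND) \sum_(a < d0) \sum_(b < d0) u a * (x l a * x l b * w l * u b)).
  apply: eq_bigr => l _; rewrite expr2 mulr_suml mulr_sumr; apply: eq_bigr => a _.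
  rewrite mulr_sumr mulr_sumr; apply: eq_bigr => b _; ring.
rewrite exchange_big /=; apply: eq_bigr => a _.
rewrite exchange_big /= /mv /Smat mulr_sumr; apply: eq_bigr => b _.
by rewrite mulr_suml mulr_sumr; apply: eq_bigr => l _.
Qed.

Lemma qf_bound (w : 'I_ND -> R) (u : 'I_d0 -> R) :
  \sum_(l < ND) w l * (\sum_(a < d0) x l a * u a) ^+ 2 <= opnorm (Smat w) * sqnorm u.
Proof. rewrite qfx; exact: qf_opnorm. Qed.

Definition S1 := fun a b : 'I_d0 => \sum_(l < ND) x l a * x l b.

Lemma Smat1 : Smat (fun _ => 1) = S1.
Proof. by apply: funext => a; apply: funext => b; apply: eq_bigr => l _; rewrite mulr1. Qed.

Lemma qf1_bound (u : 'I_d0 -> R) :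
  \sum_(l < ND) (\sum_(a < d0) x l a * u a) ^+ 2 <= opnorm S1 * sqnorm u.
Proof.
have := qf_bound (fun _ => 1) u; rewrite Smat1.
by under eq_bigr do rewrite mul1r.
Qed.

Lemma xt_bound (g : 'I_ND -> R) :
  sqnorm (fun a => \sum_(l < ND) x l a * g l) <= opnorm S1 * sqnorm g.
Proof.
set u := fun a => \sum_(l < ND) x l a * g l.
set U := sqnorm u.
have hU : 0 <= U by apply: sqnorm_ge0.
have hN := opnorm_ge0 S1.
have hG := sqnorm_ge0 g.
have E : U = \sum_(l < ND) g l * (\sum_(a < d0) x l a * u a).
  rewrite /U /sqnorm.
  transitivity (\sum_(a < d0) \sum_(l < ND) g l * (x l a * u a)).
    apply: eq_bigr => a _; rewrite expr2 {1}/u mulr_suml; apply: eq_bigr => l _; ring.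
  by rewrite exchange_big /=; apply: eq_bigr => l _; rewrite mulr_sumr.
have h1 : U <= Num.sqrt (sqnorm g) * Num.sqrt (opnorm S1 * U).
  rewrite {1}E; apply: le_trans (CS1 _ _) _.
  apply: ler_wpM2l; first exact: sqrtr_ge0.
  by rewrite ler_sqrt ?mulr_ge0 //; apply: qf1_bound.
have h2 : U ^+ 2 <= sqnorm g * (opnorm S1 * U).
  have h1' : 0 <= U by [].
  rewrite -[X in _ <= X]sqr_sqrtr ?mulr_ge0 // sqrtrM //.
  by rewrite ler_pXn2r // ?nnegrE // mulr_ge0 // sqrtr_ge0.
have [U0|Upos] := eqVneq U 0.
  by rewrite U0 mulr_ge0.
have Up : 0 < U by rewrite lt0r Upos hU.
rewrite expr2 mulrA [sqnorm g * _]mulrC in h2.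
by rewrite -(ler_pM2r Up).
Qed.

Lemma beta_bound (p a : 'I_m -> R) : (forall i, 0 <= p i) -> \sum_i p i = 1 ->
  \sum_i (p i * (a i - \sum_k p k * a k)) ^+ 2 <= \sum_i a i ^+ 2.
Proof.
move=> hp hs.
set mu := \sum_k p k * a k.
have p1 : forall i, p i <= 1.
  move=> i; rewrite -hs (bigD1 i) //= -[X in X <= _]addr0 lerD2l.
  by apply: sumr_ge0 => j _.
apply: (@le_trans _ _ (\sum_i p i * (a i - mu) ^+ 2)).
  apply: ler_sum => i _; rewrite exprMn.
  apply: ler_wpM2r; first exact: sqr_ge0.
  by rewrite expr2 -[X in _ <= X]mulr1 ler_wpM2l.
have E : \sum_i p i * (a i - mu) ^+ 2 = \sum_i p i * a i ^+ 2 - mu ^+ 2.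
  transitivity (\sum_i (p i * a i ^+ 2 - (2 * mu) * (p i * a i) + mu ^+ 2 * p i)).
    by apply: eq_bigr => i _; ring.
  rewrite big_split sumrB /= -!mulr_sumr hs -/mu; ring.
rewrite E.
apply: (@le_trans _ _ (\sum_i p i * a i ^+ 2)).
  by rewrite lerBlDr lerDl sqr_ge0.
apply: ler_sum => i _; rewrite -[X in _ <= X]mul1r; apply: ler_wpM2r => //.
exact: sqr_ge0.
Qed.

Variable pr : 'I_ND -> 'I_m -> R.
Hypothesis pr0 : forall l k, 0 <= pr l k.
Hypothesis pr1 : forall l, \sum_k pr l k = 1.

Definition alph (v : 'I_m -> 'I_d0 -> R) l k := \sum_(b < d0) x l b * v k b.
Definition beta (v : 'I_m -> 'I_d0 -> R) l i :=
  pr l i * (alph v l i - \sum_(k < m) pr l k * alph v l k).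

Lemma K_bound (v : 'I_m -> 'I_d0 -> R) :
  \sum_(i < m) sqnorm (fun a => \sum_(l < ND) x l a * beta v l i)
  <= opnorm S1 ^+ 2 * \sum_(i < m) sqnorm (v i).
Proof.
set N := opnorm S1.
have hN : 0 <= N by apply: opnorm_ge0.
apply: (@le_trans _ _ (\sum_(i < m) N * \sum_(l < ND) beta v l i ^+ 2)).
  by apply: ler_sum => i _; apply: (xt_bound (fun l => beta v l i)).
rewrite -mulr_sumr exchange_big /=.
apply: (@le_trans _ _ (N * \sum_(l < ND) \sum_(i < m) alph v l i ^+ 2)).
  apply: ler_wpM2l => //; apply: ler_sum => l _.
  exact: (beta_bound (fun i => pr l i) (fun i => alph v l i) (pr0 l) (pr1 l)).
rewrite exchange_big /= expr2 -mulrA; apply: ler_wpM2l => //.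
rewrite mulr_sumr; apply: ler_sum => i _.
exact: (qf1_bound (v i)).
Qed.

End HessB.
Arguments Smat {R d0 ND}.
Arguments S1 {R d0 ND}.
Arguments qf_bound {R d0 ND}.
Arguments K_bound {R m d0 ND} x {pr}.
Arguments alph {R m d0 ND}.
Arguments beta {R m d0 ND}.

Section Kap.
Variable R : realType.
Variable m : nat.

Lemma sum_delta (f : 'I_m -> R) i : \sum_k (k == i)%:R * f k = f i.
Proof.
rewrite (bigD1 i) //= eqxx mul1r big1 ?addr0 // => k /negbTE ->; by rewrite mul0r.
Qed.

Lemma sum_delta' (f : 'I_m -> R) i : \sum_k (i == k)%:R * f k = f i.
Proof. rewrite -(sum_delta f i); apply: eq_bigr => k _; by rewrite eq_sym. Qed.

Variable p : 'I_m -> R.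
Hypothesis hp0 : forall i, 0 <= p i.
Hypothesis hp1 : \sum_i p i = 1.

Definition kap i j k := p k * ((k == i)%:R - p i) * ((k == j)%:R - p j)
   - p k * p j * ((j == i)%:R - p i).

Lemma p_le1 i : p i <= 1.
Proof.
rewrite -hp1 (bigD1 i) //= -[X in X <= _]addr0 lerD2l.
by apply: sumr_ge0 => j _.
Qed.

Lemma p2_le1 i : p i ^+ 2 <= 1.
Proof. by rewrite expr_le1 // p_le1. Qed.

Lemma sump2 : \sum_i p i ^+ 2 <= 1.
Proof.
rewrite -hp1; apply: ler_sum => i _.
by rewrite expr2 -[X in _ <= X]mulr1 ler_wpM2l // p_le1.
Qed.

Lemma kapE (B : 'I_m -> R) i j :
  \sum_k kap i j k * B k = (i == j)%:R * (p i * B i) - p i * p j * B i - p i * p j * B j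
     + 2 * p i * p j * (\sum_k p k * B k) - (i == j)%:R * (p j * (\sum_k p k * B k)).
Proof.
transitivity (\sum_k ((k == i)%:R * ((k == j)%:R * (p k * B k)) - p j * ((k == i)%:R * (p k * B k))
   - p i * ((k == j)%:R * (p k * B k)) + (2 * p i * p j - p j * (j == i)%:R) * (p k * B k))).
  by apply: eq_bigr => k _; rewrite /kap; ring.
rewrite !big_split /= !sumrN -!mulr_sumr !sum_delta.
rewrite (eq_sym j i); ring.
Qed.

Lemma sumA2 (A : 'I_m -> 'I_m -> R) : \sum_i A i i ^+ 2 <= \sum_i \sum_j A i j ^+ 2.
Proof.
apply: ler_sum => i _; rewrite (bigD1 i) //= lerDl.
by apply: sumr_ge0 => j _; apply: sqr_ge0.
Qed.

Lemma CS2abs (f g : 'I_m -> 'I_m -> R) :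
  `|\sum_i \sum_j f i j * g i j| <=
   Num.sqrt (\sum_i \sum_j f i j ^+ 2) * Num.sqrt (\sum_i \sum_j g i j ^+ 2).
Proof.
have := CSabs (fun q : 'I_m * 'I_m => f q.1 q.2) (fun q => g q.1 q.2).
by rewrite !(sum_pair (fun q : 'I_m * 'I_m => _)) /=.
Qed.

Lemma kap_bound (A : 'I_m -> 'I_m -> R) (B : 'I_m -> R) :
  `|\sum_i \sum_j A i j * \sum_k kap i j k * B k| <=
   6 * Num.sqrt (\sum_i \sum_j A i j ^+ 2) * Num.sqrt (\sum_k B k ^+ 2).
Proof.
set a := Num.sqrt (\sum_i \sum_j A i j ^+ 2).
set b := Num.sqrt (\sum_k B k ^+ 2).
set mu := \sum_k p k * B k.
have ha : 0 <= a by apply: sqrtr_ge0.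
have hb : 0 <= b by apply: sqrtr_ge0.
set t1 := \sum_i A i i * (p i * B i).
set t2 := \sum_i \sum_j A i j * (p i * p j * B i).
set t3 := \sum_i \sum_j A i j * (p i * p j * B j).
set t4 := \sum_i \sum_j A i j * (p i * p j).
set t5 := \sum_i A i i * p i.
have E : \sum_i \sum_j A i j * \sum_k kap i j k * B k
    = t1 - t2 - t3 + 2 * mu * t4 - mu * t5.
  transitivity (\sum_i \sum_j ((i == j)%:R * (A i j * (p i * B i)) - A i j * (p i * p j * B i)
      - A i j * (p i * p j * B j) + 2 * mu * (A i j * (p i * p j))
      - mu * ((i == j)%:R * (A i j * p j)))).
    by apply: eq_bigr => i _; apply: eq_bigr => j _; rewrite kapE -/mu; ring.
  under eq_bigr => i _ do rewrite !big_split /= !sumrN -!mulr_sumr !sum_delta'.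
  by rewrite !big_split /= !sumrN -!mulr_sumr.
have hA2 : Num.sqrt (\sum_i A i i ^+ 2) <= a by rewrite ler_sqrt ?sumA2 //; apply: sumr_ge0 => i _; apply: sumr_ge0 => j _; apply: sqr_ge0.
have hpB : \sum_i (p i * B i) ^+ 2 <= \sum_k B k ^+ 2.
  apply: ler_sum => i _; rewrite exprMn -[X in _ <= X]mul1r ler_wpM2r ?sqr_ge0 //.
  exact: p2_le1.
have sq1 : forall S : R, S <= 1 -> Num.sqrt S <= 1.
  by move=> S hS; apply: sqrt_le_sq => //; rewrite expr1n.
have sqb : forall S : R, S <= \sum_k B k ^+ 2 -> Num.sqrt S <= b.
  by move=> S hS; rewrite /b ler_sqrt //; apply: sumr_ge0 => k _; apply: sqr_ge0.
have sp2 := sump2.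
have sp20 : 0 <= \sum_i p i ^+ 2 by apply: sumr_ge0 => i _; apply: sqr_ge0.
have spB0 : 0 <= \sum_i (p i * B i) ^+ 2 by apply: sumr_ge0 => i _; apply: sqr_ge0.
have hpp : \sum_i \sum_j (p i * p j) ^+ 2 <= 1.
  have -> : \sum_i \sum_j (p i * p j) ^+ 2 = (\sum_i p i ^+ 2) * (\sum_j p j ^+ 2); last exact: mulr_ile1.
  rewrite mulr_suml; apply: eq_bigr => i _; rewrite mulr_sumr; apply: eq_bigr => j _.
  by rewrite exprMn.
have hp2B : \sum_i \sum_j (p i * p j * B i) ^+ 2 <= \sum_k B k ^+ 2.
  have -> : \sum_i \sum_j (p i * p j * B i) ^+ 2 = (\sum_i (p i * B i) ^+ 2) * (\sum_j p j ^+ 2); last first.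
    by rewrite -[X in _ <= X]mulr1 ler_pM.
  rewrite mulr_suml; apply: eq_bigr => i _; rewrite mulr_sumr; apply: eq_bigr => j _.
  rewrite !exprMn; ring.
have hp3B : \sum_i \sum_j (p i * p j * B j) ^+ 2 <= \sum_k B k ^+ 2.
  have -> : \sum_i \sum_j (p i * p j * B j) ^+ 2 = (\sum_i p i ^+ 2) * (\sum_j (p j * B j) ^+ 2); last first.
    by rewrite -[X in _ <= X]mul1r ler_pM.
  rewrite mulr_suml; apply: eq_bigr => i _; rewrite mulr_sumr; apply: eq_bigr => j _.
  rewrite !exprMn; ring.
have h1 : `|t1| <= a * b.
  apply: le_trans (CSabs _ _) _; apply: ler_pM => //; try exact: sqrtr_ge0.
  exact: sqb.
have h2 : `|t2| <= a * b.
  apply: le_trans (CS2abs _ _) _; apply: ler_pM => //; try exact: sqrtr_ge0.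
  exact: sqb.
have h3 : `|t3| <= a * b.
  apply: le_trans (CS2abs _ _) _; apply: ler_pM => //; try exact: sqrtr_ge0.
  exact: sqb.
have h4 : `|t4| <= a.
  apply: le_trans (CS2abs _ _) _; rewrite -[X in _ <= X]mulr1; apply: ler_pM => //; try exact: sqrtr_ge0.
  exact: sq1.
have h5 : `|t5| <= a.
  apply: le_trans (CSabs _ _) _; rewrite -[X in _ <= X]mulr1; apply: ler_pM => //; try exact: sqrtr_ge0.
  exact: sq1.
have hmu : `|mu| <= b.
  apply: le_trans (CSabs _ _) _; rewrite -[X in _ <= X]mul1r; apply: ler_pM => //; try exact: sqrtr_ge0.
  exact: sq1.
have h4' : `|mu| * `|t4| <= b * a by apply: ler_pM.
have h5' : `|mu| * `|t5| <= b * a by apply: ler_pM.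
rewrite E.
have tri : `|t1 - t2 - t3 + 2 * mu * t4 - mu * t5| <=
   `|t1| + `|t2| + `|t3| + 2 * (`|mu| * `|t4|) + `|mu| * `|t5|.
  apply: le_trans (ler_normB _ _) _; rewrite normrM.
  apply: lerD; last by [].
  apply: le_trans (ler_normD _ _) _; rewrite !normrM ger0_norm //.
  apply: lerD; last by rewrite mulrA.
  apply: le_trans (ler_normB _ _) _; apply: lerD => //.
  exact: le_trans (ler_normB _ _) (lerD (lexx _) (lexx _)).
apply: le_trans tri _.
rewrite [b * a]mulrC in h4' h5'.
rewrite -mulrA.
lra.
Qed.


End Kap.
Arguments kap {R m}.
Arguments kap_bound {R m p}.
Arguments sum_delta {R m}.
Arguments sum_delta' {R m}.

Section Frame.
Variable R : realType.
Variable ND : nat.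

Lemma frame (J : finType) (u : 'I_ND -> J -> R) (z : J -> R) :
  (forall l k, 0 <= \sum_j u l j * u k j) ->
  \sum_l (\sum_j u l j * z j) ^+ 2 / (\sum_k \sum_j u l j * u k j) <= \sum_j z j ^+ 2.
Proof.
move=> hG.
set G := fun l k => \sum_j u l j * u k j.
have Gs : forall l k, G l k = G k l.
  by move=> l k; apply: eq_bigr => j _; rewrite mulrC.
set w := fun l => \sum_k G l k.
have hw : forall l, 0 <= w l by move=> l; apply: sumr_ge0 => k _; exact: hG.
set t := fun l => \sum_j u l j * z j.
set c := fun l => t l / w l.
set Q := \sum_l t l ^+ 2 / w l.
have hQ : 0 <= Q by apply: sumr_ge0 => l _; apply: divr_ge0 => //; apply: sqr_ge0.
have hZ : 0 <= \sum_j z j ^+ 2 by apply: sumr_ge0 => j _; apply: sqr_ge0.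
set g := fun j => \sum_l c l * u l j.
have E1 : Q = \sum_j g j * z j.
  transitivity (\sum_l \sum_j c l * u l j * z j).
    apply: eq_bigr => l _; rewrite /c /t.
    set T := \sum_j u l j * z j.
    under [RHS]eq_bigr do rewrite -mulrA.
    by rewrite -mulr_sumr -/T expr2 mulrAC.
  rewrite exchange_big /=; apply: eq_bigr => j _; rewrite /g mulr_suml.
  by [].
have E2 : \sum_j g j ^+ 2 = \sum_l \sum_k c l * c k * G l k.
  transitivity (\sum_j \sum_l \sum_k c l * c k * (u l j * u k j)).
    apply: eq_bigr => j _; rewrite expr2 /g mulr_suml; apply: eq_bigr => l _.
    by rewrite mulr_sumr; apply: eq_bigr => k _; ring.
  rewrite exchange_big /=; apply: eq_bigr => l _.
  rewrite exchange_big /=; apply: eq_bigr => k _.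
  by rewrite /G mulr_sumr.
have E3 : \sum_l \sum_k c l * c k * G l k <= Q.
  apply: (@le_trans _ _ (\sum_l \sum_k (c l ^+ 2 * G l k + c k ^+ 2 * G l k) / 2)).
    apply: ler_sum => l _; apply: ler_sum => k _.
    have hg := hG l k.
    have : 0 <= (c l - c k) ^+ 2 * G l k by apply: mulr_ge0 => //; apply: sqr_ge0.
    rewrite -/(G l k) in hg *.
    move=> h; rewrite ler_pdivlMr //.
    rewrite -subr_ge0; apply: le_trans h _; rewrite le_eqVlt; apply/orP; left; apply/eqP; ring.
  under eq_bigr do rewrite -mulr_suml.
  rewrite -mulr_suml.
  have -> : \sum_l \sum_k (c l ^+ 2 * G l k + c k ^+ 2 * G l k)
      = \sum_l c l ^+ 2 * w l + \sum_l c l ^+ 2 * w l.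
    under eq_bigr do rewrite big_split /=.
    rewrite big_split /=; congr (_ + _).
      by apply: eq_bigr => l _; rewrite mulr_sumr.
    rewrite exchange_big /=; apply: eq_bigr => k _; rewrite mulr_sumr.
    by apply: eq_bigr => l _; rewrite Gs.
  have -> : \sum_l c l ^+ 2 * w l = Q.
    apply: eq_bigr => l _; rewrite /c.
    have [w0|wn0] := eqVneq (w l) 0; first by rewrite w0 invr0 !mulr0.
    by field.
  lra.
have h : Q <= Num.sqrt Q * Num.sqrt (\sum_j z j ^+ 2).
  rewrite {1}E1; apply: le_trans (CS1 _ _) _.
  apply: ler_wpM2r; first exact: sqrtr_ge0.
  by rewrite ler_sqrt // E2.
have [Q0|Qn0] := eqVneq Q 0; first by rewrite Q0.
have Qp : 0 < Q by rewrite lt0r Qn0.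
have h2 : Num.sqrt Q <= Num.sqrt (\sum_j z j ^+ 2).
  have sQ : 0 < Num.sqrt Q by rewrite sqrtr_gt0.
  have e : Num.sqrt Q * Num.sqrt Q = Q by rewrite -expr2 sqr_sqrtr.
  by rewrite -(ler_pM2l sQ) e.
by rewrite ler_sqrt in h2.
Qed.

End Frame.
Arguments frame {R ND J}.


Section Glob.
Variable R : realType.
Variables (m d0 ND : nat) (x : 'I_ND -> 'I_d0 -> R).

Definition wt l := \sum_(k < ND) (\sum_(e < d0) x l e * x k e) ^+ 2.

Lemma wt_ge0 l : 0 <= wt l.
Proof. by apply: sumr_ge0 => k _; apply: sqr_ge0. Qed.

Lemma sqr_sum (I : finType) (f : I -> R) : (\sum_i f i) ^+ 2 = \sum_i \sum_j f i * f j.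
Proof. by rewrite expr2 mulr_suml; apply: eq_bigr => i _; rewrite mulr_sumr. Qed.

Lemma frame_x (z : 'I_d0 -> 'I_d0 -> R) :
  \sum_l (\sum_a \sum_b x l a * x l b * z a b) ^+ 2 / wt l <= \sum_a \sum_b z a b ^+ 2.
Proof.
have := frame (fun l (j : 'I_d0 * 'I_d0) => x l j.1 * x l j.2) (fun j => z j.1 j.2).
have hG : forall l k, 0 <= \sum_(j : 'I_d0 * 'I_d0) x l j.1 * x l j.2 * (x k j.1 * x k j.2).
  move=> l k; rewrite sum_pair /=.
  have -> : \sum_a \sum_b x l a * x l b * (x k a * x k b) = (\sum_e x l e * x k e) ^+ 2.
    rewrite sqr_sum; apply: eq_bigr => a _; apply: eq_bigr => b _; ring.
  exact: sqr_ge0.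
move=> /(_ hG).
have W : forall l, \sum_k \sum_(j : 'I_d0 * 'I_d0) x l j.1 * x l j.2 * (x k j.1 * x k j.2) = wt l.
  move=> l; apply: eq_bigr => k _; rewrite sum_pair /= sqr_sum.
  by apply: eq_bigr => a _; apply: eq_bigr => b _; ring.
have E1 : \sum_l (\sum_(j : 'I_d0 * 'I_d0) x l j.1 * x l j.2 * z j.1 j.2) ^+ 2 /
     \sum_k \sum_(j : 'I_d0 * 'I_d0) x l j.1 * x l j.2 * (x k j.1 * x k j.2)
   = \sum_l (\sum_a \sum_b x l a * x l b * z a b) ^+ 2 / wt l.
  by apply: eq_bigr => l _; rewrite W sum_pair.
by rewrite E1 sum_pair.
Qed.

Local Notation I := ('I_m * 'I_d0)%type.

Definition Al (X : (I * I)%type -> R) l i j := \sum_(a < d0) \sum_(b < d0) x l a * x l b * X ((i, a), (j, b)).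
Definition Bl (Y : I -> R) l k := \sum_(c < d0) x l c * Y (k, c).

Lemma sqnorm_XX (X : (I * I)%type -> R) :
  sqnorm X = \sum_i \sum_j \sum_a \sum_b X ((i, a), (j, b)) ^+ 2.
Proof.
rewrite /sqnorm sum_pair sum_pair; apply: eq_bigr => i _.
under eq_bigr do rewrite sum_pair.
by rewrite exchange_big.
Qed.

Lemma G1 (X : (I * I)%type -> R) :
  \sum_l (\sum_i \sum_j Al X l i j ^+ 2) / wt l <= sqnorm X.
Proof.
rewrite sqnorm_XX.
under eq_bigr do rewrite mulr_suml.
rewrite exchange_big /=; apply: ler_sum => i _.
under eq_bigr do rewrite mulr_suml.
rewrite exchange_big /=; apply: ler_sum => j _.
exact: (frame_x (fun a b => X ((i, a), (j, b)))).
Qed.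

Lemma G2 (Y : I -> R) :
  \sum_l wt l * (\sum_k Bl Y l k ^+ 2) <= opnorm (Smat x wt) * sqnorm Y.
Proof.
under eq_bigr do rewrite mulr_sumr.
rewrite exchange_big /= /sqnorm sum_pair mulr_sumr; apply: ler_sum => k _.
exact: (qf_bound x wt (fun c => Y (k, c))).
Qed.

Lemma G3 l : wt l = 0 -> forall e, x l e = 0.
Proof.
move=> w0.
have h : (\sum_e x l e * x l e) ^+ 2 <= 0.
  rewrite -[X in _ <= X]w0 /wt (bigD1 l) //= lerDl; by apply: sumr_ge0 => k _; apply: sqr_ge0.
have h2 : (\sum_e x l e * x l e) ^+ 2 = 0 by apply/eqP; rewrite eq_le h sqr_ge0.
move/eqP: h2; rewrite sqrf_eq0 => /eqP h3.
have h4 : sqnorm (x l) = 0 by rewrite /sqnorm -[RHS]h3; apply: eq_bigr => e _; rewrite expr2.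
exact: (sqnorm0 h4).
Qed.

Lemma comb (a b w : 'I_ND -> R) : (forall l, 0 <= a l) -> (forall l, 0 <= b l) ->
  (forall l, 0 <= w l) -> (forall l, w l = 0 -> a l = 0) ->
  \sum_l Num.sqrt (a l) * Num.sqrt (b l) <=
  Num.sqrt (\sum_l a l / w l) * Num.sqrt (\sum_l w l * b l).
Proof.
move=> ha hb hw h0.
have E : forall l, Num.sqrt (a l) * Num.sqrt (b l) = Num.sqrt (a l / w l) * Num.sqrt (w l * b l).
  move=> l; have [w0|wn0] := eqVneq (w l) 0.
    by rewrite w0 (h0 l w0) sqrtr0 !mul0r sqrtr0 mul0r.
  rewrite -!sqrtrM ?divr_ge0 //; congr Num.sqrt; field; exact: wn0.
under eq_bigr do rewrite E.
apply: le_trans (CS1 _ _) _.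
have e1 : \sum_i Num.sqrt (a i / w i) ^+ 2 = \sum_l a l / w l.
  by apply: eq_bigr => i _; rewrite sqr_sqrtr // divr_ge0.
have e2 : \sum_i Num.sqrt (w i * b i) ^+ 2 = \sum_l w l * b l.
  by apply: eq_bigr => i _; rewrite sqr_sqrtr // mulr_ge0.
by rewrite e1 e2.
Qed.

End Glob.
Arguments wt {R d0 ND}.
Arguments Al {R m d0 ND}.
Arguments Bl {R m d0 ND}.

Section Third.
Variable R : realType.
Variables (m d0 ND : nat) (x : 'I_ND -> 'I_d0 -> R).
Local Notation I := ('I_m * 'I_d0)%type.
Variable pr : 'I_ND -> 'I_m -> R.
Hypothesis pr0 : forall l k, 0 <= pr l k.
Hypothesis pr1 : forall l, \sum_k pr l k = 1.

Lemma third_alg (X : (I * I)%type -> R) (Y : I -> R) :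
  sqnorm X <= 1 -> sqnorm Y <= 1 ->
  \sum_l \sum_i \sum_j Al x X l i j * \sum_k kap (pr l) i j k * Bl x Y l k
  <= 6 * Num.sqrt (opnorm (Smat x (wt x))).
Proof.
move=> hX hY.
set N := opnorm (Smat x (wt x)).
have hN : 0 <= N by apply: opnorm_ge0.
set a := fun l => \sum_i \sum_j Al x X l i j ^+ 2.
set b := fun l => \sum_k Bl x Y l k ^+ 2.
have ha : forall l, 0 <= a l.
  by move=> l; apply: sumr_ge0 => i _; apply: sumr_ge0 => j _; apply: sqr_ge0.
have hb : forall l, 0 <= b l by move=> l; apply: sumr_ge0 => k _; apply: sqr_ge0.
have h0 : forall l, wt x l = 0 -> a l = 0.
  move=> l w0; have xz := @G3 _ _ _ x l w0.
  rewrite /a big1 // => i _; rewrite big1 // => j _.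
  by rewrite /Al big1 ?expr0n // => a' _; rewrite big1 // => b' _; rewrite xz !mul0r.
apply: le_trans (ler_norm _) _.
apply: le_trans (ler_norm_sum _ _ _) _.
apply: (@le_trans _ _ (\sum_l 6 * (Num.sqrt (a l) * Num.sqrt (b l)))).
  by apply: ler_sum => l _; rewrite mulrA; exact: (kap_bound (pr0 l) (pr1 l)).
rewrite -mulr_sumr ler_pM2l //.
apply: le_trans (@comb _ _ a b (wt x) ha hb (@wt_ge0 _ _ _ x) h0) _.
rewrite -[X in _ <= X]mul1r; apply: ler_pM; try exact: sqrtr_ge0.
  apply: sqrt_le_sq => //; rewrite expr1n; exact: le_trans (@G1 _ m _ _ x X) hX.
rewrite ler_sqrt //; apply: le_trans (@G2 _ m _ _ x Y) _.
by rewrite -[X in _ <= X]mulr1 ler_wpM2l.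
Qed.

End Third.
Arguments third_alg {R m d0 ND} x {pr}.

Section Coord.
Variable R : realType.
Variables (m d0 ND : nat) (x : 'I_ND -> 'I_d0 -> R).
Local Notation I := ('I_m * 'I_d0)%type.
Local Notation E := (ebasis R).

Lemma sum_delta_and (n : nat) (f : 'I_n -> R) (b : bool) a :
  \sum_(j < n) f j * (b && (j == a))%:R = b%:R * f a.
Proof.
case: b; last by rewrite mul0r big1 // => j _; rewrite mulr0.
rewrite mul1r -[RHS](sum_delta f a); apply: eq_bigr => j _; rewrite mulrC.
by [].
Qed.

Lemma E_entry (i : 'I_m) (a : 'I_d0) (k : 'I_m) (b : 'I_d0) : E (i, a) k b = ((k == i) && (b == a))%:R.
Proof. by rewrite /ebasis /= mxE. Qed.

Lemma sf_E (l : 'I_ND) (k i : 'I_m) (a : 'I_d0) : sf x l k (E (i, a)) = (k == i)%:R * x l a.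
Proof.
rewrite /sf; under eq_bigr do rewrite E_entry.
by rewrite sum_delta_and.
Qed.

Lemma ipm_E (u : 'M[R]_(m, d0)) (j : 'I_m) (b : 'I_d0) : ipm u (E (j, b)) = u j b.
Proof.
rewrite /ipm; under eq_bigr do under eq_bigr do rewrite E_entry.
under eq_bigr do rewrite sum_delta_and.
by rewrite (sum_delta (fun i => u i b) j).
Qed.

Lemma ipm_E_sum (v : I -> R) (i : 'I_m) (a : 'I_d0) :
  \sum_(jb : I) ipm (E (i, a)) (E jb) * v jb = v (i, a).
Proof.
rewrite sum_pair.
under eq_bigr do under eq_bigr do rewrite ipm_E E_entry mulrC.
under eq_bigr => j _ do rewrite (sum_delta_and _ (fun b => v (j, b))).
exact: (sum_delta (fun j => v (j, a)) i).
Qed.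

Variable q : 'M[R]_(m, d0).

Lemma mf_E (l : 'I_ND) (i : 'I_m) (a : 'I_d0) : mf x l q (E (i, a)) = Pf x l i q * x l a.
Proof.
rewrite /mf; under eq_bigr do rewrite sf_E.
rewrite -(sum_delta (fun k => Pf x l k q * x l a) i); apply: eq_bigr => k _; ring.
Qed.

Lemma dPf_E (l : 'I_ND) (k i : 'I_m) (a : 'I_d0) : dPf x l k q (E (i, a)) = Pf x l k q * ((k == i)%:R - Pf x l i q) * x l a.
Proof. by rewrite /dPf sf_E mf_E; ring. Qed.


Variable sigma0 : R.

Lemma Hf_E2 (u : 'M[R]_(m, d0)) (j : 'I_m) (b : 'I_d0) :
  Hf x sigma0 q u (E (j, b)) = u j b / sigma0 ^+ 2 + \sum_l dPf x l j q u * x l b.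
Proof.
rewrite /Hf ipm_E; congr (_ + _); apply: eq_bigr => l _.
under eq_bigr do rewrite sf_E.
rewrite -(sum_delta (fun k => dPf x l k q u * x l b) j); apply: eq_bigr => k _; ring.
Qed.

Definition prq := fun l k => Pf x l k q.

Lemma beta_E (v : 'I_m -> 'I_d0 -> R) l i :
  \sum_j Pf x l j q * ((j == i)%:R - Pf x l i q) * alph x v l j = beta x prq v l i.
Proof.
rewrite /beta /prq.
transitivity (\sum_j (j == i)%:R * (Pf x l j q * alph x v l j) - Pf x l i q * \sum_j Pf x l j q * alph x v l j).
  rewrite mulr_sumr -sumrB; apply: eq_bigr => j _; ring.
rewrite sum_delta; ring.
Qed.

Lemma hess_mv (v : I -> R) (i : 'I_m) (a : 'I_d0) :
  \sum_(jb : I) Hf x sigma0 q (E (i, a)) (E jb) * v jb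
  = v (i, a) / sigma0 ^+ 2 + \sum_l x l a * beta x prq (fun j b => v (j, b)) l i.
Proof.
have E1 : \sum_(jb : I) Hf x sigma0 q (E (i, a)) (E jb) * v jb
  = (\sum_(jb : I) ipm (E (i, a)) (E jb) * v jb) / sigma0 ^+ 2
    + \sum_j \sum_b \sum_l x l a * (Pf x l j q * ((j == i)%:R - Pf x l i q) * (x l b * v (j, b))).
  rewrite mulr_suml sum_pair sum_pair -big_split /=; apply: eq_bigr => j _.
  rewrite -big_split /=; apply: eq_bigr => b _.
  rewrite Hf_E2 ipm_E mulrDl mulr_suml; congr (_ + _); first by rewrite mulrAC.
  by apply: eq_bigr => l _; rewrite dPf_E; ring.
rewrite E1 ipm_E_sum; congr (_ + _).
rewrite exchange_big /=.
under eq_bigr do rewrite exchange_big /=.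
rewrite exchange_big /=; apply: eq_bigr => l _.
  rewrite exchange_big /= -beta_E mulr_sumr; apply: eq_bigr => j _.
rewrite /alph mulr_sumr mulr_sumr; apply: eq_bigr => b _; ring.
Qed.


Definition Cf l k (u v : 'M[R]_(m, d0)) :=
  dPf x l k q u * (sf x l k v - mf x l q v) - Pf x l k q * (\sum_(i < m) dPf x l i q u * sf x l i v).

Lemma Tf_E3 (u v : 'M[R]_(m, d0)) (k : 'I_m) (c : 'I_d0) :
  Tf x q u v (E (k, c)) = \sum_l Cf l k u v * x l c.
Proof.
rewrite /Tf; apply: eq_bigr => l _.
under eq_bigr do rewrite sf_E.
rewrite -(sum_delta (fun k => Cf l k u v * x l c) k); apply: eq_bigr => k' _.
rewrite /Cf; ring.
Qed.

Lemma Cf_E l (i j k : 'I_m) (a b : 'I_d0) :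
  Cf l k (E (i, a)) (E (j, b)) = x l a * x l b * kap (prq l) i j k.
Proof.
rewrite /Cf /kap /prq !dPf_E !sf_E mf_E.
under eq_bigr do rewrite dPf_E sf_E.
have -> : \sum_(i0 < m) Pf x l i0 q * ((i0 == i)%:R - Pf x l i q) * x l a * ((i0 == j)%:R * x l b)
   = \sum_k (k == j)%:R * (Pf x l k q * ((k == i)%:R - Pf x l i q) * x l a * x l b).
  by apply: eq_bigr => i' _; ring.
rewrite sum_delta; ring.
Qed.


Lemma contr (X : (I * I)%type -> R) (Y : I -> R) :
  \sum_(ia : I) \sum_(jb : I) \sum_(kc : I) Tf x q (E ia) (E jb) (E kc) * X (ia, jb) * Y kc
  = \sum_l \sum_i \sum_j Al x X l i j * \sum_k kap (prq l) i j k * Bl x Y l k.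
Proof.
set K := fun l i j => \sum_k kap (prq l) i j k * Bl x Y l k.
have S1 : forall (i j : 'I_m) (a b : 'I_d0),
   \sum_(kc : I) Tf x q (E (i, a)) (E (j, b)) (E kc) * X ((i, a), (j, b)) * Y kc
   = \sum_l X ((i, a), (j, b)) * (x l a * x l b * K l i j).
  move=> i j a b; rewrite sum_pair.
  under eq_bigr do under eq_bigr do rewrite Tf_E3.
  transitivity (\sum_k \sum_l \sum_c X ((i, a), (j, b)) * (x l a * x l b * (kap (prq l) i j k * (x l c * Y (k, c))))).
    apply: eq_bigr => k _; rewrite exchange_big /=; apply: eq_bigr => c _.
    rewrite !mulr_suml; apply: eq_bigr => l _; rewrite Cf_E; ring.
  rewrite exchange_big /=; apply: eq_bigr => l _.
  rewrite /K /Bl mulr_sumr mulr_sumr; apply: eq_bigr => k _.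
  by rewrite !mulr_sumr.
rewrite sum_pair.
under eq_bigr do under eq_bigr do rewrite sum_pair.
under eq_bigr do under eq_bigr do under eq_bigr do under eq_bigr do rewrite S1.
symmetry.
transitivity (\sum_l \sum_i \sum_j \sum_a \sum_b X ((i, a), (j, b)) * (x l a * x l b * K l i j)).
  apply: eq_bigr => l _; apply: eq_bigr => i _; apply: eq_bigr => j _.
  rewrite /Al mulr_suml; apply: eq_bigr => a _; rewrite mulr_suml; apply: eq_bigr => b _.
  rewrite /K; ring.
rewrite exchange_big /=; apply: eq_bigr => i _.
rewrite exchange_big /=.
under eq_bigr do rewrite exchange_big /=.
under eq_bigr do under eq_bigr do rewrite exchange_big /=.
by rewrite exchange_big.
Qed.

End Coord.
Arguments prq {R m d0 ND}.
Arguments hess_mv {R m d0 ND}.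
Arguments contr {R m d0 ND}.

End Lemma15Helpers.
Import Lemma15Helpers.

Theorem lemma15 (R : realType) (m d0 ND : nat)
  (hm : (0 < m)%N) (hd0 : (0 < d0)%N) (hND : (0 < ND)%N)
  (x : 'I_ND -> 'I_d0 -> R) (y : 'I_ND -> 'I_m) (sigma0 c : R)
  (hsigma : 0 < sigma0) :
  (forall q : 'M[R]_(m, d0),
     opnorm (hess (Upot x y sigma0 c) q)
     <= sigma0 ^- 2 + opnorm (fun a b : 'I_d0 => \sum_(l < ND) x l a * x l b))
  /\
  (forall q : 'M[R]_(m, d0),
     tnorm123 (third (Upot x y sigma0 c) q)
     <= 6 * Num.sqrt (opnorm (fun a b : 'I_d0 =>
              \sum_(l < ND) x l a * x l b *
                (\sum_(k < ND) (\sum_(e < d0) x l e * x k e) ^+ 2)))).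
Proof.
have hs : sigma0 != 0 by rewrite gt_eqF.
have pr0 : forall (q : 'M[R]_(m, d0)) (l : 'I_ND) (k : 'I_m), 0 <= Pf x l k q.
  move=> q l k; rewrite /Pf; apply: divr_ge0; first exact/ltW/expR_gt0.
  exact: ltW (@Zf_gt0 _ _ _ _ x hm l q).
have pr1 : forall (q : 'M[R]_(m, d0)) (l : 'I_ND), \sum_k Pf x l k q = 1.
  move=> q l; rewrite /Pf -mulr_suml divff //.
  exact: lt0r_neq0 (@Zf_gt0 _ _ _ _ x hm l q).
split => q.
  apply: ge_sup.
    exists (Num.sqrt (sqnorm (fun i => \sum_j hess (Upot x y sigma0 c) q i j * (fun _ => 0 : R) j))).
    exists (fun _ => 0 : R) => //=.
    by rewrite /sqnorm big1 // => i _; rewrite expr0n.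
  move=> r [v /= hv <-].
  set N := opnorm (fun a b : 'I_d0 => \sum_(l < ND) x l a * x l b).
  have hN : 0 <= N by apply: opnorm_ge0.
  set K := fun ia : 'I_m * 'I_d0 => \sum_l x l ia.2 * beta x (prq x q) (fun j b => v (j, b)) l ia.1.
  have E : (fun ia => \sum_jb hess (Upot x y sigma0 c) q ia jb * v jb)
       = (fun ia => v ia / sigma0 ^+ 2 + K ia).
    apply: funext => -[i a].
    under eq_bigr do rewrite (@hess_eq _ _ _ _ x hm y _ c hs q).
    exact: hess_mv.
  rewrite E; apply: le_trans (Minkowski _ _) _.
  apply: lerD.
    apply: sqrt_le_sq; first by rewrite invr_ge0 exprn_ge0 // ltW.
    have -> : \sum_i (v i / sigma0 ^+ 2) ^+ 2 = (sigma0 ^- 2) ^+ 2 * sqnorm v.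
      by rewrite /sqnorm mulr_sumr; apply: eq_bigr => i _; rewrite exprMn mulrC.
    by rewrite -[X in _ <= X]mulr1 ler_wpM2l // exprn_ge0 // invr_ge0 exprn_ge0 // ltW.
  apply: sqrt_le_sq => //.
  have -> : \sum_i K i ^+ 2 = \sum_i sqnorm (fun a => \sum_l x l a * beta x (prq x q) (fun j b => v (j, b)) l i).
    by rewrite sum_pair.
  apply: le_trans (K_bound x (pr0 q) (pr1 q) _) _.
  rewrite -[X in _ <= X]mulr1 ler_wpM2l ?exprn_ge0 //.
  by move: hv; rewrite /sqnorm sum_pair.
apply: ge_sup.
  exists (\sum_i \sum_j \sum_k third (Upot x y sigma0 c) q i j k * (fun _ => 0 : R) (i, j) * (fun _ => 0 : R) k).
  exists ((fun _ => 0 : R), (fun _ => 0 : R)) => //=.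
  by split; rewrite /sqnorm big1 // => i _; rewrite expr0n.
move=> r [[X Y] /= [hX hY] <-].
under eq_bigr do under eq_bigr do under eq_bigr do rewrite (@third_eq _ _ _ _ x hm y _ c hs q).
rewrite contr.
exact: (@third_alg _ _ _ _ x (prq x q) (pr0 q) (pr1 q) X Y hX hY).
Qed.
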